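(* Define, for $x\ge 0$, $$f(x):=\frac12\,\mathrm{Erfc}\Big(-\frac{x}{2\sqrt2}\Big)+\frac12\,e^{3x^2}\,\mathrm{Erfc}\Big(\frac{5x}{2\sqrt2}\Big).$$ Then for all $x\ge 0$, $$f(x)\ge N\Big(\frac1{\sqrt5}\Big)+\frac1{12}\sqrt{\frac{10}{\pi}}\,e^{-1/10}\ (\approx 0.8072).$$
   Context: $\mathrm{Erfc}(x):=\frac{2}{\sqrt\pi}\int_x^\infty e^{-v^2}dv$ for $x\in\mathbb{R}$, and $N(x):=\frac1{\sqrt{2\pi}}\int_{-\infty}^x e^{-v^2/2}dv$ is the standard normal distribution function. *)

(* Defs.v *)
From Stdlib Require Import Reals.
From Coquelicot Require Import Coquelicot.
Open Scope R_scope.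

Definition Erfc (x : R) : R :=
  2 / sqrt PI * RInt_gen (fun v => exp (- v ^ 2)) (at_point x) (Rbar_locally p_infty).

Definition Ncdf (x : R) : R :=
  1 / sqrt (2 * PI) * RInt_gen (fun v => exp (- v ^ 2 / 2)) (Rbar_locally m_infty) (at_point x).

Definition f3 (x : R) : R :=
  1/2 * Erfc (- x / (2 * sqrt 2)) + 1/2 * exp (3 * x ^ 2) * Erfc (5 * x / (2 * sqrt 2)).

(* Main.v *)
Require Import Defs.
From Stdlib Require Import Reals Lra.
From Coquelicot Require Import Coquelicot.
Open Scope R_scope.

Definition phi2 (v : R) : R := exp (- v ^ 2).

Lemma phi2_cont v : continuous phi2 v.
Proof. apply (ex_derive_continuous (K:=R_AbsRing) (V:=R_NormedModule)). unfold phi2. auto_derive. auto. Qed.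

Lemma ex_RInt_phi2 a b : ex_RInt phi2 a b.
Proof. apply (ex_RInt_continuous (V:=R_CompleteNormedModule)). intros; apply phi2_cont. Qed.

Lemma phi2_pos v : 0 < phi2 v.
Proof. apply exp_pos. Qed.

Lemma ball_R (y e x : R) : ball y e x <-> Rabs (x - y) < e.
Proof. unfold ball; simpl; unfold AbsRing_ball, abs, minus, plus, opp; simpl. 
  split; intro H; [ now replace (x - y) with (x + - y) by ring | now replace (x + - y) with (x - y) by ring]. Qed.

Lemma mono_lim (F : R -> R) z B :
  (forall x y, z <= x <= y -> F x <= F y) -> (forall x, z <= x -> F x <= B) ->
  exists l, filterlim F (Rbar_locally p_infty) (locally l).
Proof.
  intros Hm Hb.
  set (E := fun y => exists x, z <= x /\ y = F x).
  assert (HE : bound E). { exists B. intros y [x [Hx ->]]. now apply Hb. }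
  assert (HE2 : exists y, E y). { exists (F z). exists z. split; [lra|auto]. }
  destruct (completeness E HE HE2) as [l [Hub Hlub]].
  exists l. apply filterlim_locally. intros eps.
  assert (Hex : exists x0, z <= x0 /\ l - eps < F x0).
  { apply Classical_Prop.NNPP. intro Hn.
    assert (l <= l - eps). { apply Hlub. intros y [x [Hx ->]].
      apply Rnot_lt_le. intro Hc. apply Hn. exists x. split; auto. }
    destruct eps; simpl in *; lra. }
  destruct Hex as [x0 [Hx0 Hlt]].
  exists x0. intros x Hx. apply ball_R.
  assert (F x0 <= F x) by (apply Hm; lra).
  assert (F x <= l) by (apply Hub; exists x; split; [lra|auto]).
  apply Rabs_lt_between'. lra.
Qed.

Lemma gen_pinf (f : R -> R) a l : (forall b, ex_RInt f a b) ->
  filterlim (fun b => RInt f a b) (Rbar_locally p_infty) (locally l) ->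
  is_RInt_gen f (at_point a) (Rbar_locally p_infty) l.
Proof.
  intros Hex Hl P HP.
  specialize (Hl P HP).
  exists (fun x => x = a) (fun b => P (RInt f a b)).
  - reflexivity.
  - exact Hl.
  - intros x y -> Hy. exists (RInt f a y). split; auto. apply (RInt_correct (V:=R_CompleteNormedModule)); auto.
Qed.

Lemma gen_minf (f : R -> R) a l : (forall c, ex_RInt f c a) ->
  filterlim (fun c => RInt f c a) (Rbar_locally m_infty) (locally l) ->
  is_RInt_gen f (Rbar_locally m_infty) (at_point a) l.
Proof.
  intros Hex Hl P HP.
  specialize (Hl P HP).
  exists (fun c => P (RInt f c a)) (fun x => x = a).
  - exact Hl.
  - reflexivity.
  - intros x y Hx ->. exists (RInt f x a). split; auto. apply (RInt_correct (V:=R_CompleteNormedModule)); auto.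
Qed.

Lemma exp_le' x y : x <= y -> exp x <= exp y.
Proof. intros H. destruct (Rle_lt_or_eq_dec _ _ H) as [h|h]. left; now apply exp_increasing. subst; lra. Qed.

Lemma RInt_phi2_nonneg p q : p <= q -> 0 <= RInt phi2 p q.
Proof. intros H. apply RInt_ge_0; auto. apply ex_RInt_phi2. intros; left; apply phi2_pos. Qed.

Lemma RInt_phi2_chasles p q r : RInt phi2 p q + RInt phi2 q r = RInt phi2 p r.
Proof. apply (RInt_Chasles (V:=R_CompleteNormedModule)); apply ex_RInt_phi2. Qed.

Lemma RInt_phi2_bound z B : z <= B -> RInt phi2 z B <= exp (1 - 2*z) / 2.
Proof.
  intros H.
  assert (Hi : is_RInt (fun v => exp (1 - 2*v)) z B
     (minus (- exp (1 - 2*B) / 2) (- exp (1 - 2*z) / 2))).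
  { apply (is_RInt_derive (V:=R_CompleteNormedModule) (fun v => - exp (1 - 2*v) / 2) (fun v => exp (1 - 2*v))).
    - intros x _. auto_derive; auto. replace (1 + - (2*x)) with (1 - 2*x) by ring. field.
    - intros x _. apply (ex_derive_continuous (K:=R_AbsRing) (V:=R_NormedModule)). auto_derive. auto. }
  apply Rle_trans with (RInt (fun v => exp (1 - 2*v)) z B).
  - apply RInt_le.
    + exact H.
    + apply ex_RInt_phi2.
    + eexists; exact Hi.
    + intros x _. unfold phi2. apply exp_le'. pose proof (Rle_0_sqr (x-1)). unfold Rsqr in *. nra.
  - rewrite (is_RInt_unique _ _ _ _ Hi). unfold minus, plus, opp; simpl.
    pose proof (exp_pos (1 - 2*B)). lra.
Qed.

Definition T (z : R) : R := RInt_gen phi2 (at_point z) (Rbar_locally p_infty).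

Lemma T_lim z : filterlim (fun B => RInt phi2 z B) (Rbar_locally p_infty) (locally (T z)).
Proof.
  destruct (mono_lim (fun B => RInt phi2 z B) z (exp (1 - 2*z) / 2)) as [l Hl].
  - intros x y Hxy. rewrite <- (RInt_phi2_chasles z x y).
    pose proof (RInt_phi2_nonneg x y). lra.
  - intros x Hx. now apply RInt_phi2_bound.
  - assert (H : is_RInt_gen phi2 (at_point z) (Rbar_locally p_infty) l).
    { apply gen_pinf; auto. intros; apply ex_RInt_phi2. }
    unfold T. rewrite (is_RInt_gen_unique (V:=R_CompleteNormedModule) _ _ H). exact Hl.
Qed.

Lemma T_is z : is_RInt_gen phi2 (at_point z) (Rbar_locally p_infty) (T z).
Proof. apply gen_pinf. intros; apply ex_RInt_phi2. apply T_lim. Qed.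

Lemma T_chasles p q : T p = RInt phi2 p q + T q.
Proof.
  unfold T.
  rewrite <- (RInt_gen_Chasles (V:=R_CompleteNormedModule) phi2 q).
  - rewrite RInt_gen_at_point. reflexivity. apply ex_RInt_phi2.
  - exists (RInt phi2 p q). apply is_RInt_gen_at_point. apply (RInt_correct (V:=R_CompleteNormedModule)). apply ex_RInt_phi2.
  - exists (T q). apply T_is.
Qed.

Definition Np z := 15 + 35*z + 30*z^2.
Definition Dp z := 20 + 60*z + 72*z^2 + 60*z^3.
Definition Mf z := Np z / Dp z.
Definition dMf z := ((35 + 60*z) * Dp z - Np z * (60 + 144*z + 180*z^2)) / (Dp z)^2.

Lemma Dp_pos z : 0 <= z -> 0 < Dp z.
Proof. intros. unfold Dp. assert (0 <= z^2) by (apply pow_le; auto). assert (0 <= z^3) by (apply pow_le; auto). lra. Qed.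

Lemma Mf_bounds z : 0 <= z -> 0 <= Mf z <= 1.
Proof.
  intros Hz. pose proof (Dp_pos z Hz). unfold Mf.
  assert (0 <= z^2) by (apply pow_le; auto). assert (0 <= z^3) by (apply pow_le; auto).
  split.
  - apply Rmult_le_pos. unfold Np; lra. left; apply Rinv_0_lt_compat; auto.
  - apply Rmult_le_reg_r with (Dp z); auto. unfold Rdiv. rewrite Rmult_assoc, Rinv_l by lra.
    unfold Np, Dp in *. lra.
Qed.

Lemma Mf_derive z : 0 <= z -> is_derive Mf z (dMf z).
Proof.
  intros Hz. pose proof (Dp_pos z Hz). unfold Mf, dMf, Np, Dp in *.
  auto_derive. lra. field. lra.
Qed.

Definition hM v := exp (- v^2) * Mf v.
Definition dhM v := exp (- v^2) * (dMf v - 2 * v * Mf v).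
Definition Qp z := 200 + 840*z - 140*z^2 - 720*z^3 + 144*z^4 + 120*z^5.

Lemma Qp_nonneg z : 0 <= z -> 0 <= Qp z.
Proof.
  intros Hz. unfold Qp. pose proof (Rle_0_sqr (z - 7/5)). unfold Rsqr in *.
  assert (0 <= z * ((z - 7/5)*(z-7/5))) by (apply Rmult_le_pos; auto).
  assert (0 <= z * z* ((z - 7/5)*(z-7/5))) by (apply Rmult_le_pos; nra).
  assert (0 <= z * z* z* ((z - 7/5)*(z-7/5))) by (apply Rmult_le_pos; nra).
  nra.
Qed.

Lemma phi2_dhM z : 0 <= z -> phi2 z + dhM z = exp (- z^2) * (Qp z / (Dp z)^2).
Proof.
  intros Hz. pose proof (Dp_pos z Hz). unfold phi2, dhM, dMf, Mf, Qp, Np, Dp in *.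
  field. lra.
Qed.

Lemma hM_derive z : 0 <= z -> is_derive hM z (dhM z).
Proof.
  intros Hz.
  assert (He : is_derive (fun v => exp (- v^2)) z (- (2 * z) * exp (- z^2))).
  { auto_derive; auto. replace (z*(z*1)) with (z^2) by ring. ring. }
  pose proof (is_derive_mult (K:=R_AbsRing) (fun v => exp (- v^2)) Mf z _ _ He (Mf_derive z Hz)) as H.
  unfold hM.
  replace (dhM z) with (plus (mult (- (2 * z) * exp (- z^2)) (Mf z)) (mult (exp (- z^2)) (dMf z))).
  - apply H. intros; apply Rmult_comm.
  - unfold dhM, plus, mult; simpl. ring.
Qed.

Lemma dhM_cont x : 0 <= x -> continuous dhM x.
Proof.
  intros Hx. pose proof (Dp_pos x Hx).
  apply (ex_derive_continuous (K:=R_AbsRing) (V:=R_NormedModule)).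
  unfold dhM, dMf, Mf, Np, Dp in *. auto_derive. simpl in H. repeat split; try apply Rmult_integral_contrapositive_currified; lra.
Qed.

Lemma RInt_dhM z B : 0 <= z <= B -> is_RInt dhM z B (hM B - hM z).
Proof.
  intros H.
  apply (is_RInt_derive (V:=R_CompleteNormedModule) hM dhM z B).
  - intros x Hx. rewrite Rmin_left in Hx by lra. apply hM_derive. lra.
  - intros x Hx. rewrite Rmin_left in Hx by lra. apply dhM_cont. lra.
Qed.

Lemma exp_neg_sq_small B : 1 <= B -> exp (- B^2) < 1 / B.
Proof.
  intros HB. rewrite exp_Ropp.
  assert (h := exp_ineq1 (B^2)). assert (B^2 <> 0) by (apply pow_nonzero; lra).
  specialize (h H).
  unfold Rdiv. rewrite Rmult_1_l. apply Rinv_lt_contravar. nra. nra.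
Qed.

Lemma Mills_B z B : 0 <= z <= B -> hM z - exp (- B^2) <= RInt phi2 z B.
Proof.
  intros H.
  pose proof (RInt_dhM z B H) as Hd.
  assert (Hs : 0 <= RInt (fun v => phi2 v + dhM v) z B).
  { apply RInt_ge_0. lra.
    apply (ex_RInt_plus (V:=R_CompleteNormedModule)). apply ex_RInt_phi2. eexists; exact Hd.
    intros x Hx. rewrite phi2_dhM by lra. apply Rmult_le_pos. left; apply exp_pos.
    unfold Rdiv. apply Rmult_le_pos. apply Qp_nonneg; lra.
    left. apply Rinv_0_lt_compat. apply pow_lt. apply Dp_pos; lra. }
  rewrite (RInt_plus (V:=R_CompleteNormedModule)) in Hs.
  2: apply ex_RInt_phi2. 2: eexists; exact Hd.
  rewrite (is_RInt_unique _ _ _ _ Hd) in Hs. unfold plus in Hs; simpl in Hs.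
  assert (hM B <= exp (- B^2)).
  { unfold hM. pose proof (Mf_bounds B ltac:(lra)). pose proof (exp_pos (- B^2)). nra. }
  lra.
Qed.

Lemma Mills z : 0 <= z -> hM z <= T z.
Proof.
  intros Hz. apply Rnot_lt_le. intro Hlt.
  set (eps := (hM z - T z) / 2).
  assert (Heps : 0 < eps) by (unfold eps; lra).
  pose proof (T_lim z) as Hl.
  apply filterlim_locally with (eps := mkposreal eps Heps) in Hl.
  destruct Hl as [M0 HM0].
  set (B := Rmax M0 (Rmax z 1) + 1 + 1 / eps).
  assert (HB1 : Rmax M0 (Rmax z 1) < B).
  { unfold B. assert (0 < 1/eps) by (apply Rdiv_lt_0_compat; lra). lra. }
  assert (Hm1 : M0 <= Rmax M0 (Rmax z 1)) by apply Rmax_l.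
  assert (Hm2 : Rmax z 1 <= Rmax M0 (Rmax z 1)) by apply Rmax_r.
  assert (Hm3 : z <= Rmax z 1) by apply Rmax_l.
  assert (Hm4 : 1 <= Rmax z 1) by apply Rmax_r.
  specialize (HM0 B ltac:(lra)). apply ball_R in HM0. simpl in HM0.
  apply Rabs_lt_between' in HM0.
  pose proof (Mills_B z B ltac:(lra)).
  pose proof (exp_neg_sq_small B ltac:(lra)).
  assert (1 / B < eps).
  { assert (1/eps < B) by (unfold B; lra).
    assert (0 < 1/eps) by (apply Rdiv_lt_0_compat; lra).
    assert (1 < eps * B). { replace 1 with (eps * (1/eps)) by (field; lra). apply Rmult_lt_compat_l; lra. }
    apply Rmult_lt_reg_r with B. lra. unfold Rdiv. rewrite Rmult_assoc, Rinv_l by lra. lra. }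
  unfold eps in *. lra.
Qed.

Definition hg a := exp (- a^2) * Mf (5 * a).
Definition dhg a := exp (- a^2) * (5 * dMf (5 * a) - 2 * a * Mf (5 * a)).
Definition Rp z := -600 - 2520*z - 11260*z^2 - 11472*z^3 + 1296*z^4 + 6936*z^5 + 2880*z^6.

Lemma phi2_dhg a : 0 <= a -> phi2 a + dhg a = exp (- a^2) * (Rp (5*a) / (Dp (5*a))^2).
Proof.
  intros Ha. pose proof (Dp_pos (5*a) ltac:(lra)). unfold phi2, dhg, dMf, Mf, Rp, Np, Dp in *.
  field. lra.
Qed.

Lemma hg_derive a : 0 <= a -> is_derive hg a (dhg a).
Proof.
  intros Ha.
  assert (He : is_derive (fun v => exp (- v^2)) a (- (2 * a) * exp (- a^2))).
  { auto_derive; auto. replace (a*(a*1)) with (a^2) by ring. ring. }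
  assert (Hm : is_derive (fun v => Mf (5 * v)) a (5 * dMf (5 * a))).
  { pose proof (is_derive_comp Mf (fun v => 5 * v) a (dMf (5*a)) 5) as Hc.
    simpl in Hc. 
    replace (5 * dMf (5*a)) with (scal 5 (dMf (5*a))) by (unfold scal; simpl; unfold mult; simpl; ring).
    apply Hc. apply Mf_derive. lra. auto_derive; auto. ring. }
  pose proof (is_derive_mult (K:=R_AbsRing) (fun v => exp (- v^2)) (fun v => Mf (5*v)) a _ _ He Hm) as H.
  unfold hg.
  replace (dhg a) with (plus (mult (- (2 * a) * exp (- a^2)) (Mf (5*a))) (mult (exp (- a^2)) (5 * dMf (5*a)))).
  - apply H. intros; apply Rmult_comm.
  - unfold dhg, plus, mult; simpl. ring.
Qed.

Lemma dhg_cont x : 0 <= x -> continuous dhg x.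
Proof.
  intros Hx. pose proof (Dp_pos (5*x) ltac:(lra)).
  apply (ex_derive_continuous (K:=R_AbsRing) (V:=R_NormedModule)).
  unfold dhg, dMf, Mf, Np, Dp in *. auto_derive. simpl in H. repeat split; try apply Rmult_integral_contrapositive_currified; lra.
Qed.

Lemma RInt_dhg p q : 0 <= p -> 0 <= q -> is_RInt dhg p q (hg q - hg p).
Proof.
  intros Hp Hq.
  apply (is_RInt_derive (V:=R_CompleteNormedModule) hg dhg p q).
  - intros x Hx. apply hg_derive. assert (0 <= Rmin p q) by (apply Rmin_glb; auto). lra.
  - intros x Hx. apply dhg_cont. assert (0 <= Rmin p q) by (apply Rmin_glb; auto). lra.
Qed.

Lemma G_diff b p q : 0 <= p -> 0 <= q ->
  (RInt phi2 b q + hg q) - (RInt phi2 b p + hg p) = RInt (fun u => phi2 u + dhg u) p q.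
Proof.
  intros Hp Hq. pose proof (RInt_dhg p q Hp Hq) as Hd.
  rewrite (RInt_plus (V:=R_CompleteNormedModule)).
  2: apply ex_RInt_phi2. 2: eexists; exact Hd.
  rewrite (is_RInt_unique _ _ _ _ Hd). unfold plus; simpl.
  rewrite <- (RInt_phi2_chasles b p q). ring.
Qed.

Lemma Rp_neg z : 0 <= z <= 269/200 -> Rp z <= 0.
Proof.
  intros Hz. unfold Rp.
  assert (h1: 0 <= z*(269/200 - z)) by nra.
  nra.
Qed.

Lemma Rp_pos z : 271/200 <= z -> 0 <= Rp z.
Proof.
  intros Hz. unfold Rp.
  assert (ht: 0 <= z - 271/200) by lra. remember (z - 271/200) as t eqn:Ht. replace z with (t + 271/200) by lra. clear Ht Hz.
  replace (-600 - 2520*(t + 271/200) - 11260*(t + 271/200)^2 - 11472*(t + 271/200)^3 + 1296*(t + 271/200)^4 + 6936*(t + 271/200)^5 + 2880*(t + 271/200)^6) with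
  ((64679262719837/100000000000) + (112509104412629/1000000000)*t^1 + (274564693757/1000000)*t^2 + (665492733/2500)*t^3 + (3190092/25)*t^4 + (151752/5)*t^5 + (2880)*t^6) by field.
  assert (0 <= t^1) by (apply pow_le; auto).
  assert (0 <= t^2) by (apply pow_le; auto).
  assert (0 <= t^3) by (apply pow_le; auto).
  assert (0 <= t^4) by (apply pow_le; auto).
  assert (0 <= t^5) by (apply pow_le; auto).
  assert (0 <= t^6) by (apply pow_le; auto).
  lra.
Qed.

Lemma Mf_mono z : 269/200 <= z <= 271/200 -> Mf (271/200) <= Mf z.
Proof.
  intros Hz. pose proof (Dp_pos z ltac:(lra)). pose proof (Dp_pos (271/200) ltac:(lra)).
  unfold Mf. apply Rmult_le_reg_r with (Dp z * Dp (271/200)). apply Rmult_lt_0_compat; auto.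
  replace (Np (271 / 200) / Dp (271 / 200) * (Dp z * Dp (271 / 200))) with (Np (271/200) * Dp z) by (field; lra).
  replace (Np z / Dp z * (Dp z * Dp (271 / 200))) with (Np z * Dp (271/200)) by (field; lra).
  unfold Np, Dp. 
  assert (h1: 0 <= (271/200 - z)) by lra.
  assert (h2: 0 <= (271/200 - z) * z) by nra.
  assert (h3: 0 <= (271/200 - z) * z * z) by nra.
  assert (h4: 0 <= (271/200 - z) * z * z * z) by nra.
  nra.
Qed.

Lemma hg_mono a : 269/1000 <= a <= 271/1000 -> hg (271/1000) <= hg a.
Proof.
  intros Ha. unfold hg.
  replace (5 * (271/1000)) with (271/200) by field.
  pose proof (Mf_mono (5*a) ltac:(lra)).
  pose proof (Mf_bounds (271/200) ltac:(lra)).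
  assert (exp (- (271/1000)^2) <= exp (- a^2)) by (apply exp_le'; nra).
  pose proof (exp_pos (- (271/1000)^2)).
  apply Rmult_le_compat; lra.
Qed.

Lemma ex_RInt_sum p q : 0 <= p -> 0 <= q -> ex_RInt (fun u => phi2 u + dhg u) p q.
Proof.
  intros Hp Hq. apply (ex_RInt_plus (V:=R_CompleteNormedModule)). apply ex_RInt_phi2.
  eexists; apply RInt_dhg; auto.
Qed.

Lemma core b a : 0 <= a -> RInt phi2 b (269/1000) + hg (271/1000) <= RInt phi2 b a + hg a.
Proof.
  intros Ha.
  destruct (Rle_lt_dec a (269/1000)) as [H1|H1].
  - pose proof (G_diff b a (269/1000) Ha ltac:(lra)) as HG.
    assert (RInt (fun u => phi2 u + dhg u) a (269/1000) <= 0).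
    { apply Rle_trans with (RInt (fun _ => 0) a (269/1000)).
      apply RInt_le; auto. apply ex_RInt_sum; lra. apply ex_RInt_const.
      intros x Hx. rewrite phi2_dhg by lra.
      assert (Rp (5*x) <= 0) by (apply Rp_neg; lra).
      assert (0 < Dp (5*x)^2) by (apply pow_lt; apply Dp_pos; lra).
      assert (Rp (5*x) / Dp (5*x)^2 <= 0).
      { unfold Rdiv. assert (0 < / Dp (5*x)^2) by (apply Rinv_0_lt_compat; auto). nra. }
      pose proof (exp_pos (- x^2)). nra.
      rewrite RInt_const. unfold scal; simpl; unfold mult; simpl. lra. }
    pose proof (hg_mono (269/1000) ltac:(lra)). lra.
  - destruct (Rle_lt_dec a (271/1000)) as [H2|H2].
    + pose proof (hg_mono a ltac:(lra)).
      pose proof (RInt_phi2_chasles b (269/1000) a).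
      pose proof (RInt_phi2_nonneg (269/1000) a ltac:(lra)). lra.
    + pose proof (G_diff b (271/1000) a ltac:(lra) ltac:(lra)) as HG.
      assert (0 <= RInt (fun u => phi2 u + dhg u) (271/1000) a).
      { apply RInt_ge_0. lra. apply ex_RInt_sum; lra.
        intros x Hx. rewrite phi2_dhg by lra.
        assert (0 <= Rp (5*x)) by (apply Rp_pos; lra).
        assert (0 < Dp (5*x)^2) by (apply pow_lt; apply Dp_pos; lra).
        assert (0 <= Rp (5*x) / Dp (5*x)^2).
        { unfold Rdiv. assert (0 < / Dp (5*x)^2) by (apply Rinv_0_lt_compat; auto). nra. }
        pose proof (exp_pos (- x^2)). nra. }
      pose proof (RInt_phi2_chasles b (269/1000) (271/1000)).
      pose proof (RInt_phi2_nonneg (269/1000) (271/1000) ltac:(lra)). lra.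
Qed.

Lemma exp_upper y : 0 <= y -> exp (- y) <= 1 / (1 + y/4)^4.
Proof.
  intros Hy.
  assert (He : exp (- y) = exp (- (y/4)) ^ 4).
  { simpl. rewrite Rmult_1_r, <- !exp_plus. f_equal. field. }
  assert (H1 : exp (- (y/4)) <= 1 / (1 + y/4)).
  { rewrite exp_Ropp. unfold Rdiv. rewrite Rmult_1_l. apply Rinv_le_contravar. lra. apply exp_ineq1_le. }
  rewrite He. unfold Rdiv. rewrite Rmult_1_l. rewrite <- pow_inv. apply pow_incr. split.
  left; apply exp_pos. unfold Rdiv in H1. rewrite Rmult_1_l in H1. exact H1.
Qed.

Lemma exp_lower y : 0 <= y <= 4 -> (1 - y/4)^4 <= exp (- y).
Proof.
  intros Hy.
  assert (He : exp (- y) = exp (- (y/4)) ^ 4).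
  { simpl. rewrite Rmult_1_r, <- !exp_plus. f_equal. field. }
  rewrite He. apply pow_incr. split. lra.
  pose proof (exp_ineq1_le (- (y/4))). lra.
Qed.

Definition s10 := sqrt 2 * sqrt 5.

Lemma s10_sq : s10 * s10 = 10.
Proof.
  unfold s10. replace (sqrt 2 * sqrt 5 * (sqrt 2 * sqrt 5)) with ((sqrt 2 * sqrt 2) * (sqrt 5 * sqrt 5)) by ring.
  rewrite !sqrt_sqrt by lra. ring.
Qed.

Lemma s10_pos : 0 < s10.
Proof. unfold s10. apply Rmult_lt_0_compat; apply sqrt_lt_R0; lra. Qed.

Lemma s10_bounds : 3.1622776 <= s10 <= 3.1622777.
Proof. pose proof s10_sq. pose proof s10_pos. split; nra. Qed.

Lemma numeric : s10 / 12 * exp (- (1/10)) <= RInt phi2 (1 / s10) (269/1000) + hg (271/1000).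
Proof.
  pose proof s10_bounds as Hs. pose proof s10_pos as Hp.
  set (b := 1 / s10).
  assert (Hb : 0.3162277 <= b <= 0.316228).
  { unfold b. split.
    - apply Rmult_le_reg_r with s10; auto. unfold Rdiv. rewrite Rmult_assoc, Rinv_l by lra. nra.
    - apply Rmult_le_reg_r with s10; auto. unfold Rdiv. rewrite Rmult_assoc, Rinv_l by lra. nra. }
  assert (HI : RInt phi2 (269/1000) b <= (b - 269/1000) * exp (- (269/1000)^2)).
  { apply Rle_trans with (RInt (fun _ => exp (- (269/1000)^2)) (269/1000) b).
    - apply RInt_le. lra. apply ex_RInt_phi2. apply ex_RInt_const.
      intros x Hx. unfold phi2. apply exp_le'. nra.
    - rewrite RInt_const. unfold scal; simpl; unfold mult; simpl. lra. }
  assert (Hsw : RInt phi2 b (269/1000) = - RInt phi2 (269/1000) b).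
  { pose proof (RInt_phi2_chasles b (269/1000) b). rewrite (RInt_point (V:=R_CompleteNormedModule)) in H.
    unfold zero in H; simpl in H. lra. }
  rewrite Hsw.
  pose proof (exp_upper ((269/1000)^2) ltac:(nra)) as E1.
  pose proof (exp_lower ((271/1000)^2) ltac:(split; nra)) as E2.
  pose proof (exp_upper (1/10) ltac:(lra)) as E3.
  assert (Hm : Mf (5 * (271/1000)) = (15 + 35*(271/200) + 30*(271/200)^2) / (20 + 60*(271/200) + 72*(271/200)^2 + 60*(271/200)^3)).
  { unfold Mf, Np, Dp. replace (5 * (271/1000)) with (271/200) by field. reflexivity. }
  assert (Hm2 : 0.30699 <= Mf (5 * (271/1000))) by (rewrite Hm; lra).
  unfold hg.
  assert (h1 : (b - 269/1000) * exp (- (269/1000)^2) <= (0.316228 - 269/1000) * (1 / (1 + (269/1000)^2/4)^4)).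
  { apply Rmult_le_compat; try lra. left; apply exp_pos. }
  assert (h2 : (1 - (271/1000)^2/4)^4 * 0.30699 <= exp (- (271/1000)^2) * Mf (5 * (271/1000))).
  { apply Rmult_le_compat; try lra. }
  assert (h3 : s10 * exp (- (1/10)) <= 3.16228 * (1 / (1 + (1/10)/4)^4)).
  { apply Rmult_le_compat; try lra. left; apply exp_pos. }
  assert (Hc1 : (0.316228 - 269/1000) * (1 / (1 + (269/1000)^2/4)^4) <= 0.04396) by lra.
  assert (Hc2 : 0.92855 * 0.30699 <= (1 - (271/1000)^2/4)^4 * 0.30699) by lra.
  assert (Hc3 : 3.16228 * (1 / (1 + (1/10)/4)^4) <= 2.86488) by lra.
  lra.
Qed.

Lemma refl p q : RInt phi2 (-p) (-q) = RInt phi2 q p.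
Proof.
  pose proof (RInt_comp_lin (V:=R_CompleteNormedModule) phi2 (-1) 0 p q (ex_RInt_phi2 _ _)) as H.
  replace (-1 * p + 0) with (-p) in H by ring. replace (-1 * q + 0) with (-q) in H by ring.
  rewrite <- H.
  rewrite (RInt_ext (V:=R_CompleteNormedModule) _ (fun y => scal (-1) (phi2 y))).
  - rewrite (RInt_scal (V:=R_CompleteNormedModule)) by apply ex_RInt_phi2.
    unfold scal; simpl; unfold mult; simpl.
    pose proof (RInt_phi2_chasles p q p). rewrite (RInt_point (V:=R_CompleteNormedModule)) in H0.
    unfold zero in H0; simpl in H0. lra.
  - intros x _. unfold phi2. f_equal. f_equal. f_equal. ring.
Qed.

Definition psi (v : R) := exp (- v ^ 2 / 2).

Lemma psi_cont v : continuous psi v.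
Proof. apply (ex_derive_continuous (K:=R_AbsRing) (V:=R_NormedModule)). unfold psi. auto_derive. auto. Qed.

Lemma ex_RInt_psi a b : ex_RInt psi a b.
Proof. apply (ex_RInt_continuous (V:=R_CompleteNormedModule)). intros; apply psi_cont. Qed.

Lemma psi_id c y : @eq R (RInt psi c y) (sqrt 2 * RInt phi2 (-(y / sqrt 2)) (-(c / sqrt 2))).
Proof.
  assert (Hs : 0 < sqrt 2) by (apply sqrt_lt_R0; lra).
  assert (Hs2 : sqrt 2 * sqrt 2 = 2) by (apply sqrt_sqrt; lra).
  pose proof (RInt_comp_lin (V:=R_CompleteNormedModule) phi2 (- / sqrt 2) 0 c y (ex_RInt_phi2 _ _)) as H.
  replace (- / sqrt 2 * c + 0) with (-(c / sqrt 2)) in H by (field; lra).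
  replace (- / sqrt 2 * y + 0) with (-(y / sqrt 2)) in H by (field; lra).
  rewrite (RInt_ext (V:=R_CompleteNormedModule) _ (fun t => scal (- / sqrt 2) (psi t))) in H.
  - rewrite (RInt_scal (V:=R_CompleteNormedModule)) in H by apply ex_RInt_psi.
    unfold scal in H; simpl in H; unfold mult in H; simpl in H.
    change (- / sqrt 2 * RInt psi c y = RInt phi2 (-(c/sqrt 2)) (-(y/sqrt 2))) in H.
    pose proof (RInt_phi2_chasles (-(y / sqrt 2)) (-(c / sqrt 2)) (-(y / sqrt 2))) as H0.
    rewrite (RInt_point (V:=R_CompleteNormedModule)) in H0. unfold zero in H0; simpl in H0.
    assert (@eq R (RInt psi c y) (- sqrt 2 * RInt phi2 (- (c / sqrt 2)) (- (y / sqrt 2)))).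
    { rewrite <- H, <- Rmult_assoc. replace (- sqrt 2 * - / sqrt 2) with 1 by (field; lra). rewrite Rmult_1_l. reflexivity. }
    rewrite H1. replace (RInt phi2 (- (c / sqrt 2)) (- (y / sqrt 2))) with (- RInt phi2 (- (y / sqrt 2)) (- (c / sqrt 2))) by lra. ring.
  - intros x _. unfold phi2, psi. f_equal. f_equal.
    replace ((- / sqrt 2 * x + 0) ^ 2) with (x^2 / (sqrt 2 * sqrt 2)) by (field; lra).
    rewrite Hs2. field.
Qed.

Lemma Ncdf_val : Ncdf (1 / sqrt 5) = T (- (1 / s10)) / sqrt PI.
Proof.
  assert (Hs : 0 < sqrt 2) by (apply sqrt_lt_R0; lra).
  assert (Hs5 : 0 < sqrt 5) by (apply sqrt_lt_R0; lra).
  assert (Hpi : 0 < sqrt PI) by (apply sqrt_lt_R0; apply PI_RGT_0).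
  set (y := 1 / sqrt 5).
  assert (Hy : y / sqrt 2 = 1 / s10) by (unfold y, s10; field; lra).
  assert (HG : is_RInt_gen psi (Rbar_locally m_infty) (at_point y) (sqrt 2 * T (- (1 / s10)))).
  { apply gen_minf. intros; apply ex_RInt_psi.
    apply filterlim_locally. intros eps.
    assert (He2 : 0 < eps / 2) by (destruct eps; simpl; lra).
    pose proof (T_lim (- (1 / s10))) as Hl.
    apply filterlim_locally with (eps := mkposreal _ He2) in Hl.
    destruct Hl as [M0 HM0].
    exists (- (sqrt 2 * M0)). intros c Hc. apply ball_R.
    rewrite psi_id, Hy.
    assert (HB : M0 < - (c / sqrt 2)).
    { apply Rmult_lt_reg_l with (sqrt 2); auto.
      replace (sqrt 2 * - (c / sqrt 2)) with (- c) by (field; lra). lra. }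
    specialize (HM0 _ HB). apply ball_R in HM0. simpl in HM0.
    assert (Hs2 : sqrt 2 < 2).
    { assert (sqrt 2 * sqrt 2 = 2) by (apply sqrt_sqrt; lra). nra. }
    replace (sqrt 2 * RInt phi2 (- (1 / s10)) (- (c / sqrt 2)) - sqrt 2 * T (- (1 / s10)))
      with (sqrt 2 * (RInt phi2 (- (1 / s10)) (- (c / sqrt 2)) - T (- (1 / s10)))) by ring.
    rewrite Rabs_mult, (Rabs_pos_eq (sqrt 2)) by lra.
    destruct eps as [e ep]; simpl in *.
    apply Rle_lt_trans with (2 * Rabs (RInt phi2 (- (1 / s10)) (- (c / sqrt 2)) - T (- (1 / s10)))).
    apply Rmult_le_compat_r. apply Rabs_pos. lra. unfold ball in HM0; simpl in HM0; unfold AbsRing_ball, abs, minus, plus, opp in HM0; simpl in HM0. replace (RInt phi2 (- (1 / s10)) (- (c / sqrt 2)) + - T (- (1 / s10))) with (RInt phi2 (- (1 / s10)) (- (c / sqrt 2)) - T (- (1 / s10))) in HM0 by ring. lra. }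
  unfold Ncdf. change (fun v => exp (- v ^ 2 / 2)) with psi. fold y.
  rewrite (is_RInt_gen_unique (V:=R_CompleteNormedModule) _ _ HG).
  rewrite sqrt_mult by (try lra; left; apply PI_RGT_0).
  field. split; lra.
Qed.

Theorem lemma3p1 (x : R) (hx : 0 <= x) :
  f3 x >= Ncdf (1 / sqrt 5) + 1 / 12 * sqrt (10 / PI) * exp (- (1 / 10)).
Proof.
  assert (Hs : 0 < sqrt 2) by (apply sqrt_lt_R0; lra).
  assert (Hs2 : sqrt 2 * sqrt 2 = 2) by (apply sqrt_sqrt; lra).
  assert (Hpi : 0 < sqrt PI) by (apply sqrt_lt_R0; apply PI_RGT_0).
  set (a := x / (2 * sqrt 2)).
  assert (Ha : 0 <= a) by (unfold a; apply Rdiv_le_0_compat; lra).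
  assert (HE1 : Erfc (- x / (2 * sqrt 2)) = 2 / sqrt PI * T (-a)).
  { unfold Erfc. replace (- x / (2 * sqrt 2)) with (-a) by (unfold a; field; lra). reflexivity. }
  assert (HE2 : Erfc (5 * x / (2 * sqrt 2)) = 2 / sqrt PI * T (5 * a)).
  { unfold Erfc. replace (5 * x / (2 * sqrt 2)) with (5 * a) by (unfold a; field; lra). reflexivity. }
  assert (Hsq : sqrt (10 / PI) = s10 / sqrt PI).
  { rewrite sqrt_div_alt by apply PI_RGT_0. unfold s10. rewrite <- sqrt_mult by lra.
    replace (2 * 5) with 10 by ring. reflexivity. }
  unfold f3. rewrite HE1, HE2, Ncdf_val, Hsq.
  rewrite (T_chasles (-a) (- (1 / s10))), refl.
  pose proof (Mills (5 * a) ltac:(lra)) as HMi.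
  assert (Hx : 3 * x^2 + - (5 * a)^2 = - a^2).
  { assert (x = a * (2 * sqrt 2)) by (unfold a; field; lra).
    rewrite H. replace ((a * (2 * sqrt 2))^2) with (a^2 * 4 * (sqrt 2 * sqrt 2)) by ring.
    rewrite Hs2. ring. }
  assert (Hg : exp (3 * x^2) * hM (5 * a) = hg a).
  { unfold hM, hg. rewrite <- Rmult_assoc, <- exp_plus, Hx. reflexivity. }
  assert (Hk : exp (3 * x^2) * hM (5 * a) <= exp (3 * x^2) * T (5 * a)).
  { apply Rmult_le_compat_l. left; apply exp_pos. exact HMi. }
  pose proof (core (1 / s10) a Ha) as Hc.
  pose proof numeric as Hn.
  set (R0 := RInt phi2 (1 / s10) a) in *.
  set (Tb := T (- (1 / s10))) in *.
  set (T5 := T (5 * a)) in *.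
  set (E3 := exp (- (1 / 10))) in *.
  set (X3 := exp (3 * x^2)) in *.
  assert (Hmain : s10 / 12 * E3 <= R0 + X3 * T5) by lra.
  apply Rle_ge.
  replace (1 / 2 * (2 / sqrt PI * (R0 + Tb)) + 1 / 2 * X3 * (2 / sqrt PI * T5))
    with ((R0 + X3 * T5) / sqrt PI + Tb / sqrt PI) by (field; lra).
  replace (Tb / sqrt PI + 1 / 12 * (s10 / sqrt PI) * E3) with ((s10 / 12 * E3) / sqrt PI + Tb / sqrt PI) by (field; lra).
  apply Rplus_le_compat_r. apply Rmult_le_compat_r. left; apply Rinv_0_lt_compat; auto. exact Hmain.
Qed.
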